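(* There is a constant $C>0$ such that for all $d\ge1$, $$\pi_d(p_1p_2\cdots p_{d+1})=O(C^d).$$
   Context: $p_i$ denotes the $i$-th prime. For a real $x$, $\pi_d(x)$ is the number of squarefree positive integers $m\le x$ having exactly $d$ prime factors. *)

(* Defs.v *)
From mathcomp Require Import all_boot.
Set Implicit Arguments. Unset Strict Implicit. Unset Printing Implicit Defensive.

Definition next_prime (m : nat) : nat :=
  ex_minn (let: exist2 p Hmp Hp := prime_above m in
           ex_intro (fun q => (m < q) && prime q) p (introT andP (conj Hmp Hp))).

(* p_i, the i-th prime (1-indexed): p_1 = 2, p_2 = 3, ... *)
Definition nth_prime (i : nat) : nat := iter i next_prime 1.

Definition primorial (k : nat) : nat := \prod_(1 <= i < k.+1) nth_prime i.

Definition squarefree (m : nat) : bool :=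
  (0 < m) && all (fun p => ~~ (p ^ 2 %| m)) (primes m).

Definition pi_d (d x : nat) : nat :=
  count (fun m => squarefree m && (size (primes m) == d)) (iota 1 x).

(* Main.v *)
Require Import Defs.
From mathcomp Require Import all_boot zify.
Set Implicit Arguments. Unset Strict Implicit. Unset Printing Implicit Defensive.

Lemma next_primeP m : [/\ m < next_prime m, prime (next_prime m) &
  forall q, m < q -> prime q -> next_prime m <= q].
Proof.
rewrite /next_prime; case: ex_minnP => x /andP[H1 H2] H3; split => // q H4 H5.
by apply: H3; rewrite H4 H5.
Qed.

Lemma nth_primeS i : nth_prime i.+1 = next_prime (nth_prime i).
Proof. by rewrite /nth_prime iterS. Qed.

Lemma nth_prime_prime i : 0 < i -> prime (nth_prime i).
Proof. by case: i => // i _; rewrite nth_primeS; case: (next_primeP (nth_prime i)). Qed.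

Lemma nth_prime_lt i : nth_prime i < nth_prime i.+1.
Proof. by rewrite nth_primeS; case: (next_primeP (nth_prime i)). Qed.

Lemma nth_prime_mono i j : i < j -> nth_prime i < nth_prime j.
Proof.
elim: j => // j IH; rewrite ltnS leq_eqVlt => /orP[/eqP->|/IH h]; first exact: nth_prime_lt.
exact: ltn_trans h (nth_prime_lt j).
Qed.

Lemma nth_prime_le i j : i <= j -> nth_prime i <= nth_prime j.
Proof. by rewrite leq_eqVlt => /orP[/eqP->//|/nth_prime_mono/ltnW]. Qed.

Lemma prime_le_nth x k : prime x -> x <= nth_prime k ->
  exists2 i, 0 < i <= k & x = nth_prime i.
Proof.
move=> px; elim: k => [|k IH].
  by rewrite /nth_prime /= => h; have := prime_gt1 px; rewrite ltnNge h.
have [h _|h h2] := leqP x (nth_prime k).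
  by case: (IH h) => i /andP[h1 h2] ->; exists i => //; rewrite h1 (leq_trans h2).
exists k.+1; first by rewrite leqnn.
apply/eqP; rewrite eqn_leq h2 nth_primeS.
by case: (next_primeP (nth_prime k)) => _ _ H; apply: H.
Qed.

Definition Fl d := [seq nth_prime i | i <- iota 1 d.+1].

Lemma memF d x : prime x -> (x \in Fl d) = (x <= nth_prime d.+1).
Proof.
move=> px; apply/mapP/idP => [[i]|h].
  rewrite mem_iota => /andP[_ hi] ->; apply: nth_prime_le; lia.
case: (prime_le_nth px h) => i /andP[h1 h2] ->; exists i; [rewrite mem_iota; lia | reflexivity].
Qed.

Lemma Fl_prop d x : x \in Fl d -> prime x /\ x <= nth_prime d.+1.
Proof.
case/mapP => i; rewrite mem_iota => /andP[h1 h2] ->; split; first exact: nth_prime_prime.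
apply: nth_prime_le; lia.
Qed.

Lemma Fl_uniq d : uniq (Fl d).
Proof.
rewrite map_inj_uniq; first exact: iota_uniq.
move=> i j h; case: (ltngtP i j) => [/nth_prime_mono|/nth_prime_mono|] //; rewrite h ltnn //.
Qed.


Lemma fact_double n : 2^n * (n`! * n`!) <= (n.*2)`!.
Proof.
elim: n => [|n IH] //.
rewrite doubleS !factS expnS.
move: IH; set X := 2 ^ n; set Y := n`!; set Z := (n.*2)`!; move=> IH.
have h1 : 2 * X * (n.+1 * Y * (n.+1 * Y)) = (2 * n.+1 * n.+1) * (X * (Y * Y)).
  by rewrite !mulnA; lia.
rewrite h1 [X in _ <= X]mulnA; apply: leq_mul; last exact: IH.
lia.
Qed.

Lemma bin_ge n : 2^n <= 'C(n.*2, n).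
Proof.
have h := bin_fact (leq_addl n n); rewrite addnK addnn in h.
have hp : 0 < n`! * n`! by rewrite muln_gt0 fact_gt0.
rewrite -(leq_pmul2r hp) h; exact: fact_double.
Qed.

Lemma div2_le n x : 0 < x -> n.*2 %/ x <= (n %/ x).*2 + 1.
Proof.
move=> x0; rewrite -ltnS ltn_divLR //; have := ltn_ceil n x0; lia.
Qed.

Lemma sum_le_min m T : \sum_(1 <= k < m.+1) (k <= T) = minn m T.
Proof.
elim: m => [|m IH]; first by rewrite big_geq // min0n.
rewrite big_nat_recr // IH; case: (leqP m.+1 T) => h /=; lia.
Qed.

Lemma logn_bin q n : prime q -> logn q 'C(n.*2, n) <= trunc_log q n.*2.
Proof.
move=> pq; set T := trunc_log q n.*2.
have q1 : 1 < q := prime_gt1 pq.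
have h := bin_fact (leq_addl n n); rewrite addnK addnn in h.
have hC : 0 < 'C(n.*2, n) by rewrite bin_gt0 -addnn leq_addl.
have hl : logn q (n.*2)`! = logn q 'C(n.*2, n) + (logn q n`! + logn q n`!).
  rewrite -h lognM ?muln_gt0 ?fact_gt0 // lognM ?fact_gt0 //.
have ext : logn q n`! = \sum_(1 <= k < n.*2.+1) n %/ q ^ k.
  rewrite logn_fact // [in RHS](big_cat_nat _ (n := n.+1)) //=; last by lia.
  rewrite [X in _ = _ + X]big1_seq ?addn0 // => k /andP[_]; rewrite mem_index_iota => /andP[hk _].
  apply: divn_small; apply: leq_trans (ltn_expl k q1); exact: ltnW.
have key : \sum_(1 <= k < n.*2.+1) n.*2 %/ q ^ k <=
   \sum_(1 <= k < n.*2.+1) ((n %/ q ^ k + n %/ q ^ k) + (k <= T)).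
  apply: leq_sum => k _.
  have [hk|hk] := leqP (q ^ k) n.*2.
    have -> : (k <= T) = true by apply: trunc_log_max.
    rewrite addnn; apply: div2_le; by rewrite expn_gt0 ltnW.
  by rewrite divn_small.
rewrite big_split /= big_split /= sum_le_min -ext -logn_fact // hl in key.
move: key; lia.
Qed.

Lemma cheb_dvd q n : 0 < n -> q \in primes 'C(n.*2, n) -> q ^ logn q 'C(n.*2, n) <= n.*2.
Proof.
move=> n0; rewrite mem_primes => /and3P[pq hC _].
have q1 : 1 < q := prime_gt1 pq.
apply: leq_trans (trunc_logP q1 _); first by rewrite leq_exp2l // logn_bin.
by lia.
Qed.

Lemma cheb_le q n : 0 < n -> q \in primes 'C(n.*2, n) -> q <= n.*2.
Proof.
move=> n0 h; apply: leq_trans (cheb_dvd n0 h).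
have := h; rewrite -logn_gt0 => hl.
by rewrite -{1}(expn1 q) leq_pexp2l // ?prime_gt0 //; move: h; rewrite mem_primes => /andP[].
Qed.

Lemma prod_le_c (s : seq nat) (F : nat -> nat) c :
  {in s, forall x, F x <= c} -> \prod_(x <- s) F x <= c ^ size s.
Proof.
elim: s => [|a s IH] h; first by rewrite big_nil.
rewrite big_cons expnS; apply: leq_mul; first by apply: h; rewrite mem_head.
by apply: IH => x hx; apply: h; rewrite in_cons hx orbT.
Qed.

Lemma prod_ge_c (s : seq nat) (F : nat -> nat) c :
  {in s, forall x, c <= F x} -> c ^ size s <= \prod_(x <- s) F x.
Proof.
elim: s => [|a s IH] h; first by rewrite big_nil.
rewrite big_cons expnS; apply: leq_mul; first by apply: h; rewrite mem_head.
by apply: IH => x hx; apply: h; rewrite in_cons hx orbT.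
Qed.

Lemma prod_primes_logn m : 0 < m -> m = \prod_(q <- primes m) q ^ logn q m.
Proof. by move=> m0; rewrite {1}(prod_prime_decomp m0) prime_decompE big_map. Qed.

Lemma lt_next_le q k : prime q -> q < nth_prime k.+1 -> q <= nth_prime k.
Proof.
move=> pq h; rewrite leqNgt; apply/negP => h2.
case: (next_primeP (nth_prime k)) => _ _ H; have := H q h2 pq.
by rewrite -nth_primeS leqNgt h.
Qed.

Lemma cheb n k : 0 < n -> (n.*2) ^ k < 2 ^ n -> nth_prime k.+1 <= n.*2.
Proof.
move=> n0 hk; rewrite leqNgt; apply/negP => hp.
set C := 'C(n.*2, n).
have hC : 0 < C by rewrite bin_gt0 -addnn leq_addl.
have hsz : size (primes C) <= k.
  have -> : k = size [seq nth_prime i | i <- iota 1 k] by rewrite size_map size_iota.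
  apply: uniq_leq_size; first exact: primes_uniq.
  move=> q hq; have pq : prime q by move: hq; rewrite mem_primes => /andP[].
  have hq2 : q <= nth_prime k.
    by apply: lt_next_le => //; apply: leq_ltn_trans hp; exact: cheb_le hq.
  case: (prime_le_nth pq hq2) => i hi ->; apply: map_f; rewrite mem_iota; lia.
have : C <= n.*2 ^ size (primes C).
  rewrite {1}(prod_primes_logn hC); apply: prod_le_c => q hq; exact: cheb_dvd.
move=> h1; have h2 : n.*2 ^ size (primes C) <= n.*2 ^ k by rewrite leq_pexp2l // ?double_gt0.
have := bin_ge n; rewrite -/C => h3.
have := leq_trans h3 (leq_trans h1 h2); rewrite leqNgt hk //.
Qed.

Fixpoint subs (s : seq nat) : seq (seq nat) :=
  if s is x :: s' then [seq x :: t | t <- subs s'] ++ subs s' else [:: [::]].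

Lemma size_subs s : size (subs s) = 2 ^ size s.
Proof. by elim: s => //= x s IH; rewrite size_cat size_map IH expnS mul2n addnn. Qed.

Lemma nil_subs s : [::] \in subs s.
Proof. by elim: s => //= x s IH; rewrite mem_cat IH orbT. Qed.

Lemma mem_subs s t : subseq t s -> t \in subs s.
Proof.
elim: s t => [|x s IH] [|y t] //=; first by move=> _; rewrite mem_cat nil_subs orbT.
rewrite mem_cat; case: eqP => [->|_] h.
  by rewrite map_f // IH.
by rewrite IH ?orbT.
Qed.

Fixpoint allseqs (N K : nat) : seq (seq nat) :=
  if K is K'.+1 then [:: [::]] ++ [seq x :: t | x <- iota 0 N, t <- allseqs N K']
  else [:: [::]].

Lemma size_allseqs N K : size (allseqs N K) <= N.+1 ^ K.
Proof.
elim: K => [|K IH] //=; rewrite size_allpairs size_iota expnS.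
have : N * size (allseqs N K) <= N * N.+1 ^ K by rewrite leq_mul2l IH orbT.
have : 1 <= N.+1 ^ K by rewrite expn_gt0.
lia.
Qed.

Lemma mem_allseqs N K t : size t <= K -> all (fun x => x < N) t -> t \in allseqs N K.
Proof.
elim: K t => [|K IH] [|y t] //= hs /andP[hy ht].
rewrite in_cons /=; apply: allpairs_f; first by rewrite mem_iota.
exact: IH.
Qed.

Lemma leq_expb m n e : m <= n -> m ^ e <= n ^ e.
Proof. by move=> h; elim: e => // e IH; rewrite !expnS leq_mul. Qed.

Lemma arith1 p q s g : 0 < p -> p ^ q.+1 < (p + q) ^ q -> q <= g ->
  p ^ (s + g).+1 < p ^ s * (p + q) ^ g.
Proof.
move=> p0 hq hg; rewrite -(subnKC hg); set g' := g - q.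
have e : p ^ (s + (q + g')).+1 = p ^ s * (p ^ q.+1 * p ^ g').
  by rewrite -!expnD; congr (_ ^ _); lia.
rewrite e expnD ltn_pmul2l ?expn_gt0 ?p0 //.
apply: leq_trans (_ : (p + q) ^ q * p ^ g' <= _).
  by rewrite ltn_pmul2r ?expn_gt0 ?p0.
rewrite leq_mul2l; apply/orP; right; apply: leq_expb; exact: leq_addr.
Qed.

Lemma sqfree_prod m : squarefree m -> m = \prod_(x <- primes m) x.
Proof.
case/andP => m0 /allP hs; rewrite {1}(prod_primes_logn m0).
apply: eq_big_seq => x hx; have := hs x hx.
have px : prime x by move: hx; rewrite mem_primes => /andP[].
rewrite pfactor_dvdn // => h1; have : 0 < logn x m by rewrite logn_gt0.
by move: h1; case: (logn x m) => [|[|k]] //; rewrite expn1.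
Qed.

Section Count.
Variable d : nat.
Let p := nth_prime d.+1.
Let F := Fl d.

Lemma p_gt0 : 0 < p.
Proof. by apply: prime_gt0; apply: nth_prime_prime. Qed.

Definition fA m := filter (mem (primes m)) F.
Definition fB m := filter (fun x => p < x) (primes m).

Lemma decomp m : squarefree m ->
  m = \prod_(x <- fA m) x * \prod_(x <- fB m) x.
Proof.
move=> sm; rewrite {1}(sqfree_prod sm) (bigID (fun x => x <= p)) /=.
congr (_ * _); last first.
  by rewrite /fB big_filter; apply: eq_bigl => x; rewrite ltnNge.
rewrite -big_filter; apply: perm_big; apply: uniq_perm.
- exact: filter_uniq (primes_uniq m).
- exact: filter_uniq (Fl_uniq d).
move=> x; rewrite !mem_filter /=; apply/andP/andP => [][h1 h2].
  have px : prime x by move: h2; rewrite mem_primes => /andP[].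
  by split => //; rewrite /F memF.
have px : prime x by move: h1; rewrite mem_primes => /andP[].
by split => //; move: h2; rewrite /F memF.
Qed.
End Count.

Section Count2.
Variable d : nat.
Let p := nth_prime d.+1.
Let F := Fl d.

Lemma primorialE : primorial d.+1 = \prod_(x <- F) x.
Proof. by rewrite /primorial /F /Fl big_map /index_iota subn1. Qed.

Lemma pos_prod (s : seq nat) : {in s, forall x, prime x} -> 0 < \prod_(x <- s) x.
Proof.
move=> h; have := prod_ge_c (F := id) (c := 1) (s := s); rewrite exp1n; apply.
by move=> x /h /prime_gt0.
Qed.

Lemma prodB_le m : m <= primorial d.+1 -> squarefree m -> size (primes m) = d ->
  \prod_(x <- fB d m) x <= p ^ (size (fB d m)).+1.
Proof.
move=> hm sm hs.
set M := filter (predC (mem (primes m))) F.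
have hP : primorial d.+1 = \prod_(x <- fA d m) x * \prod_(x <- M) x.
  by rewrite primorialE (bigID (mem (primes m))) /fA /M !big_filter.
have hA : 0 < \prod_(x <- fA d m) x.
  by apply: pos_prod => x; rewrite mem_filter => /andP[_ /Fl_prop []].
have h1 : \prod_(x <- fB d m) x <= \prod_(x <- M) x.
  by rewrite -(leq_pmul2l hA) -hP -decomp.
apply: leq_trans h1 _.
have hsz : size M = (size (fB d m)).+1.
  have e1 : size (fA d m) + size M = d.+1.
    by rewrite !size_filter count_predC /F /Fl size_map size_iota.
  have e2 : size (fA d m) = count (fun x => x <= p) (primes m).
    rewrite -size_filter; apply: perm_size; apply: uniq_perm.
    - exact: filter_uniq (Fl_uniq d).
    - exact: filter_uniq (primes_uniq m).
    move=> x; rewrite !mem_filter /=; apply/andP/andP => [][h1 h2].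
      have px : prime x by move: h1; rewrite mem_primes => /andP[].
      by split => //; move: h2; rewrite /F memF.
    have px : prime x by move: h2; rewrite mem_primes => /andP[].
    by split => //; rewrite /F memF.
  have e3 : count (fun x => x <= p) (primes m) + size (fB d m) = size (primes m).
    rewrite -[size (primes m)](count_predC (fun x => x <= p)) /fB size_filter; congr (_ + _).
    by apply: eq_count => x; rewrite /= ltnNge.
  lia.
rewrite -hsz; apply: prod_le_c => x; rewrite mem_filter => /andP[_ /Fl_prop []] //.
Qed.
End Count2.

Section Count3.
Variable d : nat.
Let p := nth_prime d.+1.

Lemma fB_gt m x : x \in fB d m -> p < x.
Proof. by rewrite mem_filter => /andP[]. Qed.

Lemma fB_uniq m : uniq (fB d m).
Proof. exact: filter_uniq (primes_uniq m). Qed.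

Lemma fB_le_sq m : m <= primorial d.+1 -> squarefree m -> size (primes m) = d ->
  all (fun x => x < p ^ 2 + 1) (fB d m).
Proof.
move=> hm sm hs; apply/allP => x hx; rewrite addn1 ltnS.
have h := prodB_le hm sm hs; rewrite -/p in h.
have hp := p_gt0 d; rewrite -/p in hp.
have hk : 0 < size (fB d m) by case: (fB d m) hx.
rewrite (perm_big _ (perm_to_rem hx)) big_cons in h.
have h2 : p ^ size (rem x (fB d m)) <= \prod_(y <- rem x (fB d m)) y.
  apply: prod_ge_c => y /mem_rem /fB_gt; exact: ltnW.
rewrite size_rem // in h2.
have h3 : x * p ^ (size (fB d m)).-1 <= p ^ 2 * p ^ (size (fB d m)).-1.
  have -> : p ^ 2 * p ^ (size (fB d m)).-1 = p ^ (size (fB d m)).+1.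
    by rewrite -expnD; congr (_ ^ _); lia.
  apply: leq_trans h; exact: leq_mul.
by rewrite leq_pmul2r ?expn_gt0 ?hp in h3.
Qed.

Lemma fB_size q m : p ^ q.+1 < (p + q) ^ q ->
  m <= primorial d.+1 -> squarefree m -> size (primes m) = d ->
  size (fB d m) <= q.*2.
Proof.
move=> hq hm sm hs; rewrite leqNgt; apply/negP => hk.
have h := prodB_le hm sm hs; rewrite -/p in h.
have hp := p_gt0 d; rewrite -/p in hp.
set B := fB d m in h hk.
set Bs := filter (fun x => x <= p + q) B.
set Bg := filter (predC (fun x => x <= p + q)) B.
have hs1 : size Bs <= q.
  rewrite -[q](size_iota p.+1); apply: uniq_leq_size.
    exact: filter_uniq (fB_uniq m).
  move=> x; rewrite mem_filter => /andP[h1 /fB_gt h2]; rewrite mem_iota; lia.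
have hs2 : size Bs + size Bg = size B by rewrite -(count_predC (fun x => x <= p + q) B) /Bs /Bg !size_filter.
have hprod : p ^ size Bs * (p + q) ^ size Bg <= \prod_(x <- B) x.
  have -> : \prod_(x <- B) x = \prod_(x <- Bs) x * \prod_(x <- Bg) x.
    rewrite [LHS](bigID (fun x => x <= p + q)) /Bs /Bg !big_filter.
    by congr (_ * _); apply: eq_bigl => x.
  apply: leq_mul; apply: prod_ge_c => x; rewrite mem_filter.
    by case/andP => _ /fB_gt /ltnW.
  case/andP => h1 _; have h1' : ~~ (x <= p + q) := h1.
  rewrite -ltnNge in h1'; exact: ltnW h1'.
have hg : q <= size Bg by lia.
have := arith1 (size Bs) hp hq hg.
rewrite hs2 => h4; have := leq_trans h4 (leq_trans hprod h).
by rewrite ltnn.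
Qed.
End Count3.

Section Dummy.
Lemma count_main d q : nth_prime d.+1 ^ q.+1 < (nth_prime d.+1 + q) ^ q ->
  pi_d d (primorial d.+1) <= 2 ^ d.+1 * (nth_prime d.+1 ^ 2 + 2) ^ q.*2.
Proof.
move=> hq; rewrite /pi_d -size_filter.
set L := filter _ (iota 1 _).
set f := fun m => (fA d m, fB d m).
set W := [seq (a, b) | a <- subs (Fl d), b <- allseqs (nth_prime d.+1 ^ 2 + 1) q.*2].
have memL m : m \in L -> [/\ 0 < m, m <= primorial d.+1, squarefree m & size (primes m) = d].
  rewrite mem_filter mem_iota => /andP[/andP[sm /eqP hs] /andP[h1 h2]].
  split => //; lia.
have hW : size W <= 2 ^ d.+1 * (nth_prime d.+1 ^ 2 + 2) ^ q.*2.
  rewrite size_allpairs size_subs /Fl size_map size_iota leq_mul2l; apply/orP; right.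
  have := size_allseqs (nth_prime d.+1 ^ 2 + 1) q.*2; by rewrite addn2 addn1.
apply: leq_trans hW; rewrite -(size_map f).
apply: uniq_leq_size.
  rewrite map_inj_in_uniq; first exact: filter_uniq (iota_uniq _ _).
  move=> m1 m2 /memL [_ _ s1 _] /memL [_ _ s2 _] [e1 e2].
  by rewrite (decomp d s1) (decomp d s2) e1 e2.
move=> x /mapP [m /memL [m0 hm sm hs] ->].
apply: allpairs_f; first by apply: mem_subs; exact: filter_subseq.
apply: mem_allseqs; first exact: fB_size hq hm sm hs.
exact: fB_le_sq hm sm hs.
Qed.
End Dummy.

Section Dummy.
Lemma bern p q r : p ^ r * (p + r * q) <= p * (p + q) ^ r.
Proof.
elim: r => [|r IH]; first by rewrite expn0 mul0n addn0 mul1n muln1.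
rewrite !expnS; move: IH; set A := p ^ r; set B := (p + q) ^ r => IH.
have h : p * (p + r.+1 * q) <= (p + q) * (p + r * q) by nia.
have h2 : A * (p * (p + r.+1 * q)) <= A * ((p + q) * (p + r * q)) by rewrite leq_mul2l h orbT.
have h3 : (p + q) * (A * (p + r * q)) <= (p + q) * (p * B) by rewrite leq_mul2l IH orbT.
move: h2 h3; rewrite !mulnA; nia.
Qed.

Lemma hq_lemma p r t : 0 < p -> p <= r * (r * t) -> p < 2 ^ t ->
  p ^ (r * t).+1 < (p + r * t) ^ (r * t).
Proof.
move=> p0 h1 h2; set q := r * t.
have h3 : 2 * p ^ r <= (p + q) ^ r.
  rewrite -(leq_pmul2l p0); apply: leq_trans (bern p q r).
  move: h1; rewrite -/q; set A := p ^ r => h1; nia.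
have h4 : (2 * p ^ r) ^ t <= (p + q) ^ q.
  have -> : (p + q) ^ q = ((p + q) ^ r) ^ t by rewrite -expnM.
  exact: leq_expb.
apply: leq_trans h4; rewrite expnMn -expnM mulnC -/q expnS.
by rewrite mulnC ltn_pmul2l // expn_gt0 p0.
Qed.

Lemma exp_lin k : 64 * (k + 11) <= 2 ^ (k + 10).
Proof.
elim: k => [|k IH]; first by [].
have -> : k.+1 + 10 = (k + 10).+1 by lia.
rewrite expnS; lia.
Qed.

Lemma poly_h j : 20 <= j -> 16 * (8 * j + 9) * (4 * j + 5) <= 2 ^ j.
Proof.
move=> hj; set i := j %/ 2.
have hi : 10 <= i by rewrite /i; lia.
have hA := exp_lin (i - 10); rewrite subnK // in hA.
have e : i - 10 + 11 = i.+1 by lia.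
rewrite e in hA.
have hB : 2 ^ i * 2 ^ i <= 2 ^ j by rewrite -expnD leq_pexp2l //; rewrite /i; lia.
have hj2 : j <= i.*2.+1 by rewrite /i; lia.
apply: leq_trans hB.
have h1 : 16 * (8 * j + 9) * (4 * j + 5) <= 64 * i.+1 * (64 * i.+1) by nia.
apply: leq_trans h1 _; exact: leq_mul.
Qed.
End Dummy.

Section Dummy.
Lemma large_bound d : 2 ^ 40 <= d -> pi_d d (primorial d.+1) <= 2 * 4 ^ d.
Proof.
move=> hd.
have d0 : 0 < d by apply: leq_trans hd; rewrite expn_gt0.
set l := trunc_log 2 d.
have hl1 : 2 ^ l <= d := trunc_logP (isT : 1 < 2) d0.
have hl2 : d < 2 ^ l.+1 := trunc_log_ltn d (isT : 1 < 2).
have hl40 : 40 <= l := trunc_log_max (isT : 1 < 2) hd.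
set h := l %/ 2; set h' := l - h.
have hh : l = h + h' by rewrite /h' /h; lia.
have hh' : h <= h' <= h.+1 by rewrite /h' /h; lia.
set Z := 2 ^ h; set Z' := 2 ^ h'.
have hV : 2 ^ l = Z * Z' by rewrite hh expnD.
have hZZ : Z' <= Z.*2.
  rewrite -mul2n /Z /Z' -expnS; apply: leq_pexp2l => //; lia.
have hZ0 : 0 < Z by rewrite expn_gt0.
have hlV : l.+1 <= Z * Z' by rewrite -hV; exact: ltn_expl.
set p := nth_prime d.+1.
have hp : p <= 8 * d * l.+1.
  have -> : 8 * d * l.+1 = (4 * d * l.+1).*2 by rewrite -mul2n; lia.
  apply: cheb; first by rewrite !muln_gt0 d0.
  have -> : 2 ^ (4 * d * l.+1) = (2 ^ (4 * l.+1)) ^ d.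
    by rewrite -expnM; congr (_ ^ _); lia.
  rewrite ltn_exp2r //.
  set X := 2 ^ l.+1 in hl2 *.
  have hX : l.+1 < X := ltn_expl _ (isT : 1 < 2).
  have hX8 : 8 <= X by rewrite /X (_ : 8 = 2 ^ 3) // leq_exp2l //; lia.
  have -> : 2 ^ (4 * l.+1) = X * X * X * X by rewrite mulnC expnM -/X !expnS expn0 muln1 !mulnA.
  have a1 : d * l.+1 < X * X by apply: leq_ltn_trans (_ : d * l.+1 <= d * X) _; [rewrite leq_mul2l ltnW ?orbT | rewrite ltn_pmul2r //; lia].
  have a2 : 8 * (X * X) <= X * X * X by rewrite [X in _ <= X]mulnC leq_mul2r hX8 orbT.
  have a3 : X * X * X <= X * X * X * X by rewrite leq_pmulr //; lia.
  rewrite -mul2n; lia.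
have hp2 : p < 16 * (Z * Z') * l.+1.
  apply: leq_ltn_trans hp _; rewrite expnS hV in hl2; nia.
have hp3 : p <= 16 * (Z * Z') * (Z * Z') by nia.
set r := 8 * Z; set t := l.*2 + 5.
have hq : p ^ (r * t).+1 < (p + r * t) ^ (r * t).
  apply: hq_lemma.
  - exact: p_gt0.
  - rewrite /r /t; nia.
  - have -> : 2 ^ t = 32 * (2 ^ l * 2 ^ l) by rewrite -expnD /t; rewrite (_ : 32 = 2 ^ 5) // -expnD; congr (_ ^ _); lia.
    rewrite hV; nia.
have hc := count_main hq; rewrite -/p in hc.
apply: leq_trans hc _.
have hb : p ^ 2 + 2 <= 2 ^ (l.*2.*2 + 9).
  have -> : 2 ^ (l.*2.*2 + 9) = 512 * ((Z * Z') * (Z * Z') * (Z * Z') * (Z * Z')).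
    rewrite -hV -!expnD (_ : 512 = 2 ^ 9) // -expnD; congr (_ ^ _); lia.
  rewrite expnS expn1; nia.
have hE : (l.*2.*2 + 9) * (r * t).*2 <= d.
  have h20 : 20 <= h' by lia.
  have h1 : 16 * (l.*2.*2 + 9) * (l.*2 + 5) <= Z'.
    apply: leq_trans (poly_h h20).
    apply: leq_mul; [apply: leq_mul|]; lia.
  apply: leq_trans hl1; rewrite hV.
  have e : (l.*2.*2 + 9) * (r * t).*2 = Z * (16 * (l.*2.*2 + 9) * (l.*2 + 5)).
    rewrite /r /t -!mul2n; nia.
  by rewrite e leq_mul2l h1 orbT.
apply: leq_trans (_ : 2 ^ d.+1 * 2 ^ d <= _); last first.
  by rewrite expnS -mulnA -expnD addnn -mul2n expnM.
rewrite leq_mul2l; apply/orP; right.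
apply: leq_trans (leq_expb _ hb) _.
rewrite -expnM; apply: leq_pexp2l => //.
Qed.
End Dummy.

Theorem lemma3p3 :
  exists C K : nat, 0 < C /\
    forall d : nat, 1 <= d -> pi_d d (primorial d.+1) <= K * C ^ d.
Proof.
set K0 := \max_(i < 2 ^ 40) pi_d i (primorial i.+1).
exists 4, (2 + K0); split; first by [].
move=> d _; case: (leqP (2 ^ 40) d) => hd.
  apply: leq_trans (large_bound hd) _; rewrite leq_mul2r; apply/orP; right.
  exact: leq_addr.
have h1 : pi_d d (primorial d.+1) <= K0.
  exact: (@leq_bigmax _ (fun i : 'I_(2 ^ 40) => pi_d i (primorial i.+1)) (Ordinal hd)).
apply: leq_trans h1 _; apply: leq_trans (leq_addl 2 K0) _.
by rewrite leq_pmulr // expn_gt0.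
Qed.
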